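(* Under the assumptions stated in the context, the function $x_i^{\mathrm{cv}}$ is locally Lipschitz continuous and directionally differentiable at $\hat{\mathbf{p}}$. Moreover, let $\hat{\boldsymbol{\xi}}$ be an arbitrary optimal solution of the optimization problem $\min_{\boldsymbol{\xi}\in \mathbb{R}^{n_x}} \xi_i$ s.t. $\mathbf{h}(\boldsymbol{\xi},\hat{\mathbf{p}})=\mathbf{0}$, $\mathbf{g}(\boldsymbol{\xi},\hat{\mathbf{p}})\le \mathbf{0}$ (whose optimal value is $x_i^{\mathrm{cv}}(\hat{\mathbf{p}})$). Then, for each direction $\mathbf{d}\in\mathbb{R}^{n_p}$, \begin{equation*} \begin{aligned} [x_i^{\mathrm{cv}}]'(\hat{\mathbf{p}};\mathbf{d})&\equiv\min_{\mathbf{w}\in\mathbb{R}^{n_x}}\quad w_i\\ \text{s.t.}\quad &[\nabla_\mathbf{x}g_k(\hat{\boldsymbol{\xi}},\hat{\mathbf{p}})]^\top\mathbf{w}\le-[\nabla_\mathbf{y}g_k(\hat{\boldsymbol{\xi}},\hat{\mathbf{p}})]^\top\mathbf{d},\quad\forall k\in\{1,...,n_g\}\text{ such that }g_k(\hat{\boldsymbol{\xi}},\hat{\mathbf{p}})=0,\\ &[\nabla_\mathbf{x}h_j(\hat{\boldsymbol{\xi}},\hat{\mathbf{p}})]^\top\mathbf{w}=-[\nabla_\mathbf{y}h_j(\hat{\boldsymbol{\xi}},\hat{\mathbf{p}})]^\top\mathbf{d},\quad\forall j\in\{1,...,l\}. \end{aligned} \end{equation*}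
   Context: Setting: a residual function $\mathbf{f}:\mathbb{R}^{n_x}\times\mathbb{R}^{n_p}\to\mathbb{R}^{n_x}$, a convex compact set $P\subset\mathbb{R}^{n_p}$, and $Q\subset P$ the (nonempty) set of $\mathbf{p}\in P$ for which $\mathbf{f}(\mathbf{z},\mathbf{p})=\mathbf{0}$ has a solution; an implicit function $\mathbf{x}:Q\to\mathbb{R}^{n_x}$ satisfies $\mathbf{f}(\mathbf{x}(\mathbf{p}),\mathbf{p})=\mathbf{0}$ with $\mathbf{x}(\mathbf{p})\in X:=[\mathbf{x}^{\mathrm{L}},\mathbf{x}^{\mathrm{U}}]$ for all $\mathbf{p}\in Q$. Given convex and concave relaxations $\mathbf{f}^{\mathrm{cv}},\mathbf{f}^{\mathrm{cc}}$ of $\mathbf{f}$ on $X\times P$, the implicit function convex relaxation is $x_i^{\mathrm{cv}}(\mathbf{p}):=\inf_{\boldsymbol{\xi}\in X}\xi_i$ s.t. $\mathbf{f}^{\mathrm{cv}}(\boldsymbol{\xi},\mathbf{p})\le\mathbf{0}\le\mathbf{f}^{\mathrm{cc}}(\boldsymbol{\xi},\mathbf{p})$ (with value $+\infty$ if infeasible). Assume $\mathbf{f}\equiv(\tilde{\mathbf{f}},\mathbf{h})$ where $\mathbf{h}:\mathbb{R}^{n_x}\times\mathbb{R}^{n_p}\to\mathbb{R}^{n_h}$ is affine and each $\tilde f_k$ is not affine, and the relaxations of each $\tilde f_k$ are piecewise differentiable: $\tilde f_k^{\mathrm{cv}}=\max_j \tilde f_k^{\mathrm{cv},j}$ with each $\tilde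 f_k^{\mathrm{cv},j}$ continuously differentiable and convex ($j=1,\dots,k_k$), and $\tilde f_k^{\mathrm{cc}}=\min_j \tilde f_k^{\mathrm{cc},j}$ with each $\tilde f_k^{\mathrm{cc},j}$ continuously differentiable and concave ($j=1,\dots,l_k$). Then for $\mathbf{p}\in Q$, $x_i^{\mathrm{cv}}(\mathbf{p})=\min_{\boldsymbol{\xi}\in\mathbb{R}^{n_x}}\xi_i$ s.t. $\mathbf{h}(\boldsymbol{\xi},\mathbf{p})=\mathbf{0}$, $\mathbf{g}(\boldsymbol{\xi},\mathbf{p})\le\mathbf{0}$, where $\mathbf{g}:\mathbb{R}^{n_x}\times\mathbb{R}^{n_p}\to\mathbb{R}^{n_g}$ collects all the inequality constraints $\tilde f_k^{\mathrm{cv},j}(\boldsymbol{\xi},\mathbf{p})\le 0$, $\tilde f_k^{\mathrm{cc},j}(\boldsymbol{\xi},\mathbf{p})\ge 0$ (written as $\le 0$ constraints) together with the box constraint $\boldsymbol{\xi}\in X$. Further assume, at some $\hat{\mathbf{p}}\in\mathrm{int}(Q)$: the (constant) gradients of the components $h_j$ with respect to $\boldsymbol{\xi}$ are linearly independent, and there is a neighborhood $N_{\hat{\mathbf{p}}}\subset Q$ of $\hat{\mathbf{p}}$ such that for each $\mathbf{p}\in N_{\hat{\mathbf{p}}}$ there exists $\boldsymbol{\xi}_\mathbf{p}\in X$ with $\mathbf{h}(\boldsymbol{\xi}_\mathbf{p},\mathbf{p})=\mathbf{0}$ and $\mathbf{g}(\boldsymbol{\xi}_\mathbf{p},\mathbf{p})<\mathbf{0}$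 (strong Slater condition). Here $\nabla_\mathbf{x}$ and $\nabla_\mathbf{y}$ denote partial gradients with respect to the first argument ($\boldsymbol{\xi}$) and second argument ($\mathbf{p}$), respectively, and $[x_i^{\mathrm{cv}}]'(\hat{\mathbf{p}};\mathbf{d})$ is the directional derivative. *)

(* Defs.v *)
From mathcomp Require Import all_boot all_order all_algebra.
From mathcomp Require Import all_classical all_reals all_analysis.
Set Implicit Arguments. Unset Strict Implicit. Unset Printing Implicit Defensive.
Import Order.TTheory GRing.Theory Num.Theory.
Import numFieldNormedType.Exports.
Local Open Scope ring_scope.
Local Open Scope classical_set_scope.

Section Defs.
Context {R : realType} {nx np : nat}.

Definition inbox (xL xU z : 'rV[R]_nx) : Prop :=
  forall m : 'I_nx, xL 0 m <= z 0 m <= xU 0 m.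

Definition uncurry2 (g : 'rV[R]_nx -> 'rV[R]_np -> R) :
  'rV[R]_nx * 'rV[R]_np -> R := fun zp => g zp.1 zp.2.

Definition C1 (g : 'rV[R]_nx -> 'rV[R]_np -> R) : Prop :=
  (forall zp, differentiable (uncurry2 g) zp) /\
  (forall v : 'rV[R]_nx * 'rV[R]_np,
      continuous (fun zp => 'D_v (uncurry2 g) zp)).

Definition convex_on2 (xL xU : 'rV[R]_nx) (P : set 'rV[R]_np)
    (g : 'rV[R]_nx -> 'rV[R]_np -> R) : Prop :=
  forall z1 p1 z2 p2 (t : R), inbox xL xU z1 -> P p1 -> inbox xL xU z2 -> P p2 ->
    0 <= t <= 1 ->
    g (t *: z1 + (1 - t) *: z2) (t *: p1 + (1 - t) *: p2)
      <= t * g z1 p1 + (1 - t) * g z2 p2.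

Definition concave_on2 (xL xU : 'rV[R]_nx) (P : set 'rV[R]_np)
    (g : 'rV[R]_nx -> 'rV[R]_np -> R) : Prop :=
  forall z1 p1 z2 p2 (t : R), inbox xL xU z1 -> P p1 -> inbox xL xU z2 -> P p2 ->
    0 <= t <= 1 ->
    t * g z1 p1 + (1 - t) * g z2 p2
      <= g (t *: z1 + (1 - t) *: z2) (t *: p1 + (1 - t) *: p2).

Definition affine2 (g : 'rV[R]_nx -> 'rV[R]_np -> R) : Prop :=
  exists (a : 'cV[R]_nx) (b : 'cV[R]_np) (c : R),
    forall z p, g z p = (z *m a) 0 0 + (p *m b) 0 0 + c.

Definition gradx (g : 'rV[R]_nx -> 'rV[R]_np -> R) (z : 'rV[R]_nx)
    (p : 'rV[R]_np) : 'rV[R]_nx :=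
  \row_(m < nx) 'D_(delta_mx 0 m) (fun z' : 'rV[R]_nx => g z' p) z.

Definition grady (g : 'rV[R]_nx -> 'rV[R]_np -> R) (z : 'rV[R]_nx)
    (p : 'rV[R]_np) : 'rV[R]_np :=
  \row_(m < np) 'D_(delta_mx 0 m) (fun p' : 'rV[R]_np => g z p') p.

End Defs.

Definition dotv {R : realType} {n : nat} (u v : 'rV[R]_n) : R :=
  \sum_(m < n) u 0 m * v 0 m.

(* implicit function convex relaxation
   x_i^cv(p) = inf { xi_i | xi in X, fcv(xi,p) <= 0 <= fcc(xi,p) }  (+oo if empty) *)
Definition xcv {R : realType} {nx np : nat}
    (fcv fcc : 'rV[R]_nx -> 'rV[R]_np -> 'rV[R]_nx) (xL xU : 'rV[R]_nx)
    (i : 'I_nx) (p : 'rV[R]_np) : \bar R :=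
  ereal_inf [set (xi 0 i)%:E | xi in
     [set xi | inbox xL xU xi /\ (forall m, fcv xi p 0 m <= 0)
                              /\ (forall m, 0 <= fcc xi p 0 m)]].

(* the components g_k of g (all written as "<= 0" constraints):
   the pieces fcv^{k,j}, the negated pieces -fcc^{k,j}, and the box constraints
   xL_m - xi_m <= 0, xi_m - xU_m <= 0 *)
Definition gcomp {R : realType} {nx np nf : nat}
    (kc : 'I_nf -> nat) (fcvp : forall k, 'I_(kc k) -> 'rV[R]_nx -> 'rV[R]_np -> R)
    (lc : 'I_nf -> nat) (fccp : forall k, 'I_(lc k) -> 'rV[R]_nx -> 'rV[R]_np -> R)
    (xL xU : 'rV[R]_nx) (c : 'rV[R]_nx -> 'rV[R]_np -> R) : Prop :=
  (exists k (j : 'I_(kc k)), c = fcvp k j) \/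
  (exists k (j : 'I_(lc k)), c = (fun z p => - fccp k j z p)) \/
  (exists m : 'I_nx, c = (fun z p => xL 0 m - z 0 m)) \/
  (exists m : 'I_nx, c = (fun z p => z 0 m - xU 0 m)).

Definition has_dirderiv {R : realType} {np : nat} (F : 'rV[R]_np -> R)
    (p d : 'rV[R]_np) (l : R) : Prop :=
  (fun t : R => (F (p + t *: d) - F p) / t) @ 0^'+ --> l.

(* Main.v *)
Require Import Defs.
From mathcomp Require Import all_boot all_order all_algebra.
From mathcomp Require Import all_classical all_reals all_analysis.
From mathcomp Require Import ring lra.
Import Order.TTheory GRing.Theory Num.Theory.
Import numFieldNormedType.Exports.
Local Open Scope ring_scope.
Local Open Scope classical_set_scope.

Set Implicit Arguments. Unset Strict Implicit.


Section Generic.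
Variable R : realType.

Lemma dotvDr n (u v1 v2 : 'rV[R]_n) : dotv u (v1 + v2) = dotv u v1 + dotv u v2.
Proof. by rewrite /dotv -big_split; apply: eq_bigr => m _; rewrite mxE mulrDr. Qed.

Lemma dotvZr n (u v : 'rV[R]_n) (s : R) : dotv u (s *: v) = s * dotv u v.
Proof. by rewrite /dotv mulr_sumr; apply: eq_bigr => m _; rewrite mxE mulrCA. Qed.

Lemma dotvNr n (u v : 'rV[R]_n) : dotv u (- v) = - dotv u v.
Proof. by rewrite -scaleN1r dotvZr mulN1r. Qed.

Lemma dotvBr n (u v1 v2 : 'rV[R]_n) : dotv u (v1 - v2) = dotv u v1 - dotv u v2.
Proof. by rewrite dotvDr dotvNr. Qed.

Lemma dotv0r n (u : 'rV[R]_n) : dotv u 0 = 0.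
Proof. by rewrite -(scale0r (0 : 'rV[R]_n)) dotvZr mul0r. Qed.

Lemma dotv0l n (u : 'rV[R]_n) : dotv 0 u = 0.
Proof. by rewrite /dotv big1 // => m _; rewrite mxE mul0r. Qed.

Lemma dotv_delta n (i : 'I_n) (w : 'rV[R]_n) : dotv (delta_mx 0 i) w = w 0 i.
Proof.
rewrite /dotv (bigD1 i) //= big1 ?addr0; first by rewrite mxE !eqxx mul1r.
by move=> m mi; rewrite mxE (negPf mi) andbF mul0r.

Qed.

Lemma fin_min (I : finType) (P : pred I) (m : I -> R) :
  (exists j, P j) -> exists j, P j /\ forall j', P j' -> m j <= m j'.
Proof.
case=> j0 Pj0; case: (arg_minP m Pj0) => j Pj H; exists j; split=> // j' /H; done.
Qed.

Definition lpS n (I : finType) (a : I -> 'rV[R]_n) (b : I -> R) (E : {set I})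
  (w : 'rV[R]_n) : Prop :=
  (forall j, dotv (a j) w <= b j) /\ (forall j, j \in E -> dotv (a j) w = b j).

Arguments lpS {n I}.

Lemma card_setCU1 (I : finType) (E : {set I}) j : j \notin E ->
  (#|~: (j |: E)| < #|~: E|)%N.
Proof.
move=> jE; apply: proper_card; apply/properP; split.
  by rewrite finset.setCS finset.subsetUr.
by exists j; rewrite !inE ?eqxx.
Qed.

Lemma lp_attain n (I : finType) (a : I -> 'rV[R]_n) (b : I -> R) (c : 'rV[R]_n)
  (M : R) (E : {set I}) :
  (exists w, lpS a b E w) -> (forall w, lpS a b E w -> M <= dotv c w) ->
  exists w, lpS a b E w /\ forall w', lpS a b E w' -> dotv c w <= dotv c w'.
Proof.
move: {2}#|~: E|.+1 (ltnSn #|~: E|) => k.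
elim: k E => [//|k IH] E hk [w0 Sw0] hM.
apply: contrapT => nomin.
have [w2 [S2 lt2]] : exists w2, lpS a b E w2 /\ dotv c w2 < dotv c w0.
  have : ~ (forall w', lpS a b E w' -> dotv c w0 <= dotv c w').
    by move=> H; apply: nomin; exists w0.
  move=> /existsNP [w2 /not_implyP [S2 /negP]]; rewrite -ltNge => lt2.
  by exists w2.
set u := w2 - w0.
have uE : forall j, j \in E -> dotv (a j) u = 0.
  by move=> j jE; rewrite /u dotvBr (Sw0.2 j jE) (S2.2 j jE) subrr.
have cu : dotv c u < 0 by rewrite /u dotvBr subr_lt0.
have claim : forall w, lpS a b E w -> exists j, j \notin E /\
    exists y, lpS a b (j |: E) y /\ dotv c y <= dotv c w.
  move=> w Sw.
  have [[j0 [nj0 pos0]] | none] :=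
    pselect (exists j, j \notin E /\ 0 < dotv (a j) u); last first.
    exfalso.
    have none' : forall j, j \notin E -> dotv (a j) u <= 0.
      move=> j jE; rewrite leNgt; apply/negP => pj; apply: none.
      by exists j.
    have Mw := hM w Sw.
    set s := (dotv c w - M + 1) / (- dotv c u).
    have s0 : 0 <= s.
      rewrite /s divr_ge0 //; last by rewrite oppr_ge0 ltW.
      by rewrite addr_ge0 // subr_ge0.
    have Sy : lpS a b E (w + s *: u).
      split=> j; last by move=> jE; rewrite dotvDr dotvZr uE // mulr0 addr0 Sw.2.
      rewrite dotvDr dotvZr; have [jE|jE] := boolP (j \in E).
        by rewrite uE // mulr0 addr0 Sw.1.
      apply: le_trans (Sw.1 j); rewrite gerDl.
      by rewrite mulr_ge0_le0 // none'.
    have e : s * dotv c u = - (dotv c w - M + 1).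
      by rewrite /s; field; rewrite lt_eqF.
    have := hM _ Sy; rewrite dotvDr dotvZr e; lra.
  have [js [/andP [njs posjs] jmin]] :=
    @fin_min I (fun j => (j \notin E) && (0 < dotv (a j) u))
      (fun j => (b j - dotv (a j) w) / dotv (a j) u)
      (ex_intro _ j0 (introT andP (conj nj0 pos0))).
  set s := (b js - dotv (a js) w) / dotv (a js) u.
  have s0 : 0 <= s.
    by rewrite /s divr_ge0 // ?subr_ge0 ?Sw.1 // ltW.
  exists js; split => //; exists (w + s *: u); split; last first.
    rewrite dotvDr dotvZr gerDl mulr_ge0_le0 // ltW //.
  split=> j.
    rewrite dotvDr dotvZr.
    have [jE|njE] := boolP (j \in E); first by rewrite uE // mulr0 addr0 Sw.1.
    have [pj|npj] := ltP 0 (dotv (a j) u).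
      have := jmin j; rewrite /= njE pj => /(_ isT) sle.
      rewrite -lerBrDl -ler_pdivlMr // (le_trans _ sle) //.
    apply: le_trans (Sw.1 j); rewrite gerDl.
    by rewrite mulr_ge0_le0.
  rewrite in_setU1 => /orP [/eqP ->|jE]; last first.
    by rewrite dotvDr dotvZr uE // mulr0 addr0 Sw.2.
  rewrite dotvDr dotvZr /s -mulrA mulVf ?gt_eqF // mulr1 addrC subrK //.
have [zf hzf] : exists zf : I -> 'rV[R]_n, forall j,
    (j \notin E /\ exists y, lpS a b (j |: E) y) ->
    lpS a b (j |: E) (zf j) /\
    forall w', lpS a b (j |: E) w' -> dotv c (zf j) <= dotv c w'.
  have := @choice I 'rV[R]_n (fun j z => (j \notin E /\ exists y, lpS a b (j |: E) y) ->
    lpS a b (j |: E) z /\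
    forall w', lpS a b (j |: E) w' -> dotv c z <= dotv c w').
  case.
    move=> j; have [[nj ne]|no] := pselect (j \notin E /\ exists y, lpS a b (j |: E) y);
      last by exists 0.
    have hk' : (#|~: E| <= k)%N by rewrite -ltnS.
    have hcard : (#|~: (j |: E)| < k)%N by exact: leq_trans (@card_setCU1 I E j nj) hk'.
    have hb : forall w, lpS a b (j |: E) w -> M <= dotv c w.
      move=> w [Sw1 Sw2]; apply: hM; split=> // l lE; apply: Sw2.
      by rewrite in_setU1 lE orbT.
    have [z hz] := IH (j |: E) hcard ne hb.
    by exists z.
  by move=> zf hzf; exists zf.
have ex : exists j, `[< j \notin E /\ exists y, lpS a b (j |: E) y >].
  have [j [nj [y [Sy _]]]] := claim w0 Sw0.
  by exists j; apply/asboolP; split=> //; exists y.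
have [j0 [Pj0 j0min]] := @fin_min I
    (fun j => `[< j \notin E /\ exists y, lpS a b (j |: E) y >])
    (fun j => dotv c (zf j)) ex.
move/asboolP: Pj0 => Pj0.
apply: nomin; exists (zf j0); split.
  have [[S1 S2'] _] := hzf j0 Pj0; split=> // l lE; apply: S2'.
  by rewrite in_setU1 lE orbT.
move=> w' Sw'; have [j [nj [y [Sy cy]]]] := claim w' Sw'.
have Pj : j \notin E /\ exists y, lpS a b (j |: E) y by split=> //; exists y.
apply: le_trans (j0min j _) _; first by apply/asboolP.
apply: le_trans cy; exact: (hzf j Pj).2.
Qed.

End Generic.


Section Generic2.
Variable R : realType.
Variable np : nat.
Implicit Types (F : 'rV[R]_np -> R).

Definition convex_on (B : set 'rV[R]_np) F :=
  forall p q (t : R), B p -> B q -> 0 <= t <= 1 ->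
    F (t *: p + (1 - t) *: q) <= t * F p + (1 - t) * F q.

Lemma lip_convex1 F (ph : 'rV[R]_np) (r a b : R) : 0 < r ->
  convex_on [set p | `|p - ph| < 2 * r] F ->
  (forall p, `|p - ph| < 2 * r -> a <= F p <= b) ->
  forall p q, `|p - ph| < r -> `|q - ph| < r ->
    F q - F p <= (b - a) / r * `|q - p|.
Proof.
move=> r0 cvx bnd p q hp hq.
have hp2 : `|p - ph| < 2 * r by apply: lt_le_trans hp _; lra.
have hq2 : `|q - ph| < 2 * r by apply: lt_le_trans hq _; lra.
have ba : 0 <= b - a by have := bnd p hp2; lra.
have [pq|pq] := eqVneq q p.
  by rewrite pq !subrr normr0 mulr0.
set dl := `|q - p|.
have dl0 : 0 < dl by rewrite /dl normr_gt0 subr_eq0.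
set y := q + (r / dl) *: (q - p).
have hy : `|y - ph| < 2 * r.
  rewrite /y addrAC; apply: le_lt_trans (ler_normD _ _) _.
  rewrite normrZ ger0_norm ?divr_ge0 ?ltW // -/dl mulfVK ?gt_eqF //.
  lra.
set lam := dl / (dl + r).
have lam01 : 0 <= lam <= 1.
  apply/andP; split; first by rewrite /lam divr_ge0 // ltW // addr_gt0.
  by rewrite /lam ler_pdivrMr ?addr_gt0 // mul1r lerDl ltW.
have eq : lam *: y + (1 - lam) *: p = q.
  have e1 : lam * (r / dl) = 1 - lam.
    rewrite /lam; field; apply/andP; split; last by rewrite gt_eqF.
    by rewrite gt_eqF // addr_gt0.
  rewrite /y scalerDr scalerA e1 scalerBr -addrA subrK -scalerDl.
  by rewrite addrC subrK scale1r.
have := cvx y p lam hy hp2 lam01; rewrite eq => hc.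
have hy' := bnd y hy; have hp' := bnd p hp2.
have : F q - F p <= lam * (b - a).
  apply: le_trans (_ : lam * (F y - F p) <= _).
    by move: hc; lra.
  by apply: ler_wpM2l; [case/andP: lam01 | lra].
move=> h1; apply: le_trans h1 _.
rewrite mulrC -mulrA ler_wpM2l // /lam ler_pdivrMr ?addr_gt0 //.
have -> : r^-1 * dl * (dl + r) = dl + dl * dl / r by field; rewrite gt_eqF.
by rewrite lerDl divr_ge0 ?mulr_ge0 // ltW.
Qed.

Lemma lip_convex F (ph : 'rV[R]_np) (r a b : R) : 0 < r ->
  convex_on [set p | `|p - ph| < 2 * r] F ->
  (forall p, `|p - ph| < 2 * r -> a <= F p <= b) ->
  forall p q, `|p - ph| < r -> `|q - ph| < r ->
    `|F p - F q| <= (b - a) / r * `|p - q|.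
Proof.
move=> r0 cvx bnd p q hp hq; rewrite ler_norml; apply/andP; split.
  by rewrite lerNl opprB distrC; exact: (@lip_convex1 F ph r a b r0 cvx bnd p q hp hq).
exact: (@lip_convex1 F ph r a b r0 cvx bnd q p hq hp).
Qed.

Lemma dirderiv_convex F (ph : 'rV[R]_np) (rho L : R) : 0 < rho ->
  convex_on [set p | `|p - ph| < rho] F ->
  (forall p q, `|p - ph| < rho -> `|q - ph| < rho ->
     `|F p - F q| <= L * `|p - q|) ->
  forall d, exists l, has_dirderiv F ph d l.
Proof.
move=> rho0 cvx lip d.
set tau := rho / (`|d| + 1).
have tau0 : 0 < tau by rewrite /tau divr_gt0 // ltr_wpDl.
have inball : forall t, 0 <= t < tau -> `|ph + t *: d - ph| < rho.
  move=> t /andP [t0 tt]; rewrite addrC addKr normrZ ger0_norm //.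
  apply: le_lt_trans (_ : tau * `|d| < rho).
    by have := normr_ge0 d; nra.
  rewrite /tau mulrAC ltr_pdivrMr ?ltr_wpDl // ltr_pM2l // ltrDl //.
have ph0 : `|ph - ph| < rho by rewrite subrr normr0.
set q := fun t => (F (ph + t *: d) - F ph) / t.
have qlb : forall t, 0 < t < tau -> - (L * `|d|) <= q t.
  move=> t /andP [t0 tt].
  have hb : 0 <= t < tau by rewrite ltW.
  have e : ph + t *: d - ph = t *: d by rewrite addrAC subrr add0r.
  have := lip _ _ (inball t hb) ph0; rewrite e normrZ.
  rewrite (ger0_norm (ltW t0)) ler_norml => /andP [h _].
  rewrite /q ler_pdivlMr // mulNr; move: h; rewrite mulrCA; lra.
have qmono : forall s t, 0 < s -> s <= t -> t < tau -> q s <= q t.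
  move=> s t s0 st tt.
  have t0 : 0 < t by apply: lt_le_trans st.
  have eq : (s / t) *: (ph + t *: d) + (1 - s / t) *: ph = ph + s *: d.
    rewrite scalerDr scalerA mulfVK ?gt_eqF // addrAC -scalerDl [s / t + _]addrC subrK.
    by rewrite scale1r addrC.
  have st01 : 0 <= s / t <= 1.
    apply/andP; split; first by rewrite divr_ge0 // ltW.
    by rewrite ler_pdivrMr // mul1r.
  have hb : 0 <= t < tau by rewrite ltW.
  have := cvx _ _ _ (inball t hb) ph0 st01; rewrite /= eq => hc.
  rewrite /q ler_pdivrMr // mulrAC ler_pdivlMr //.
  have e : t * (s / t * F (ph + t *: d) + (1 - s / t) * F ph) =
      s * F (ph + t *: d) + (t - s) * F ph by field; rewrite gt_eqF.
  have := ler_wpM2l (ltW t0) hc; rewrite e => hc'.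
  nra.
set S := [set x | exists t, 0 < t < tau /\ x = q t].
have S0 : S (q (tau / 2)).
  by exists (tau / 2); split => //; apply/andP; split; lra.
have hS : has_inf S.
  split; first by exists (q (tau / 2)).
  exists (- (L * `|d|)) => x [t [ht ->]]; exact: qlb.
exists (inf S); apply/cvgrPdist_lt => e e0.
have [x [t [/andP [t0 tt] ->]] lt] := inf_adherent e0 hS.
near=> s.
have s0 : 0 < s by near: s; exact: nbhs_right_gt.
have st : s < t by near: s; exact: nbhs_right_lt.
have Ss : S (q s).
  by exists s; split => //; apply/andP; split => //; apply: lt_trans tt.
have l1 := ge_inf hS.2 Ss.
have l2 := qmono s t s0 (ltW st) tt.
rewrite distrC ger0_norm ?subr_ge0 //; move: l1 l2 lt; rewrite /q; lra.
Unshelve. all: by end_near.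
Qed.

End Generic2.


Section Deriv.
Variables (R : realType) (nx np : nat).

Lemma gradx_D (g : 'rV[R]_nx -> 'rV[R]_np -> R) z p m :
  'D_(delta_mx 0 m) (fun z' => g z' p) z =
  'D_((delta_mx 0 m, 0) : 'rV[R]_nx * 'rV[R]_np) (uncurry2 g) (z, p).
Proof.
rewrite /derive; congr lim; apply: (congr1 (fun f : R -> R => f @ 0^')); apply/funext => h.
by rewrite /= /uncurry2 /= scaler0 add0r.
Qed.

Lemma grady_D (g : 'rV[R]_nx -> 'rV[R]_np -> R) z p m :
  'D_(delta_mx 0 m) (fun p' => g z p') p =
  'D_((0, delta_mx 0 m) : 'rV[R]_nx * 'rV[R]_np) (uncurry2 g) (z, p).
Proof.
rewrite /derive; congr lim; apply: (congr1 (fun f : R -> R => f @ 0^')); apply/funext => h.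
by rewrite /= /uncurry2 /= scaler0 add0r.
Qed.

Lemma pair_suml (x : 'rV[R]_nx) : ((x, 0) : 'rV[R]_nx * 'rV[R]_np) =
  \sum_(m < nx) x 0 m *: ((delta_mx 0 m, 0) : 'rV[R]_nx * 'rV[R]_np).
Proof.
rewrite {1}(row_sum_delta x).
apply: (big_rec2 (fun a b => (a, 0) = b)) => // m y1 y2 _ <-.
by rewrite [RHS]/GRing.add /= /add_pair /= scaler0 addr0.
Qed.

Lemma pair_sumr (x : 'rV[R]_np) : ((0, x) : 'rV[R]_nx * 'rV[R]_np) =
  \sum_(m < np) x 0 m *: ((0, delta_mx 0 m) : 'rV[R]_nx * 'rV[R]_np).
Proof.
rewrite {1}(row_sum_delta x).
apply: (big_rec2 (fun a b => (0, a) = b)) => // m y1 y2 _ <-.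
by rewrite [RHS]/GRing.add /= /add_pair /= scaler0 addr0.
Qed.

Lemma pairsum (u : 'rV[R]_nx) (d : 'rV[R]_np) :
  ((u, d) : 'rV[R]_nx * 'rV[R]_np) = (u, 0) + (0, d).
Proof. by rewrite [RHS]/GRing.add /= /add_pair /= addr0 add0r. Qed.

Lemma dnbhs_right (f : R -> R) (l : R) : f @ 0^' --> l -> f @ 0^'+ --> l.
Proof.
move=> H; apply: cvg_trans H; apply: cvg_app; apply: within_subset => // t /=.
by move=> t0; rewrite gt_eqF.
Qed.

Lemma dotv_gradx (g : 'rV[R]_nx -> 'rV[R]_np -> R) z p u :
  differentiable (uncurry2 g) (z, p) ->
  dotv (gradx g z p) u = 'd (uncurry2 g) (z, p) ((u, 0) : 'rV[R]_nx * 'rV[R]_np).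
Proof.
move=> dg; rewrite pair_suml linear_sum /dotv; apply: eq_bigr => m _.
by rewrite linearZ /= -deriveE // -gradx_D mxE mulrC.
Qed.

Lemma dotv_grady (g : 'rV[R]_nx -> 'rV[R]_np -> R) z p d :
  differentiable (uncurry2 g) (z, p) ->
  dotv (grady g z p) d = 'd (uncurry2 g) (z, p) ((0, d) : 'rV[R]_nx * 'rV[R]_np).
Proof.
move=> dg; rewrite pair_sumr linear_sum /dotv; apply: eq_bigr => m _.
by rewrite linearZ /= -deriveE // -grady_D mxE mulrC.
Qed.

Lemma expand_diff (g : 'rV[R]_nx -> 'rV[R]_np -> R) z p u d :
  differentiable (uncurry2 g) (z, p) ->
  (fun s => (g (z + s *: u) (p + s *: d) - g z p) / s) @ 0^'+ -->
    dotv (gradx g z p) u + dotv (grady g z p) d.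
Proof.
move=> dg.
have der := @diff_derivable _ _ _ (uncurry2 g) (z, p) (u, d) dg.
have -> : (fun s => (g (z + s *: u) (p + s *: d) - g z p) / s) =
    (fun h => h^-1 *: ((uncurry2 g \o shift (z, p)) (h *: ((u, d) : 'rV[R]_nx * 'rV[R]_np))
       - uncurry2 g (z, p))).
  apply/funext => s; rewrite /= /uncurry2 /= [z + _]addrC [p + _]addrC.
  by rewrite mulrC.
apply: dnbhs_right.
rewrite dotv_gradx // dotv_grady // -linearD -pairsum -deriveE //.
Qed.


Lemma derive_lin n (f : 'rV[R]_n -> R) a v (al : R) :
  (forall h, f (a + h *: v) = f a + h * al) -> 'D_v f a = al.
Proof.
move=> hf; rewrite /derive; apply: cvg_lim; first exact: Rhausdorff. apply: cvg_near_cst.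
near=> h; have h0 : h != 0 by near: h; exact: nbhs_dnbhs_neq.
rewrite /= [h *: v + a]addrC hf addrAC subrr add0r.
by rewrite /GRing.scale /= mulrA mulVf // mul1r.
Unshelve. all: by end_near.
Qed.

Lemma entryD (A B : 'M[R]_1) : (A + B) 0 0 = A 0 0 + B 0 0.
Proof. by rewrite mxE. Qed.

Lemma entryZ (A : 'M[R]_1) (s : R) : (s *: A) 0 0 = s * A 0 0.
Proof. by rewrite mxE. Qed.

Lemma dotv_mul n (x : 'rV[R]_n) (a : 'cV[R]_n) : (x *m a) 0 0 = dotv x a^T.
Proof. by rewrite mxE /dotv; apply: eq_bigr => m _; rewrite mxE. Qed.

Lemma dotvC n (x y : 'rV[R]_n) : dotv x y = dotv y x.
Proof. by apply: eq_bigr => m _; rewrite mulrC. Qed.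

Lemma expand_aff (g : 'rV[R]_nx -> 'rV[R]_np -> R) : affine2 g ->
  forall z p u d, g (z + u) (p + d) =
    g z p + dotv (gradx g z p) u + dotv (grady g z p) d.
Proof.
move=> [a [b [c hg]]] z p u d.
have gx : gradx g z p = a^T.
  apply/rowP => m; rewrite !mxE; apply: derive_lin => h.
  rewrite !hg mulmxDl entryD -scalemxAl entryZ -rowE.
  have -> : row m a 0 0 = a m 0 by rewrite mxE.
  ring.
have gy : grady g z p = b^T.
  apply/rowP => m; rewrite !mxE; apply: derive_lin => h.
  rewrite !hg mulmxDl entryD -scalemxAl entryZ -rowE.
  have -> : row m b 0 0 = b m 0 by rewrite mxE.
  ring.
rewrite gx gy !hg !mulmxDl !entryD !dotv_mul [dotv a^T u]dotvC [dotv b^T d]dotvC; ring.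
Qed.

End Deriv.


Section Conv.
Variables (R : realType) (nx np : nat).
Variables (xL xU : 'rV[R]_nx) (P : set 'rV[R]_np).

Definition Exp (g : 'rV[R]_nx -> 'rV[R]_np -> R) z0 p0 :=
  forall u d, (fun s => (g (z0 + s *: u) (p0 + s *: d) - g z0 p0) / s) @ 0^'+ -->
    dotv (gradx g z0 p0) u + dotv (grady g z0 p0) d.

Lemma aff_exp g z0 p0 : affine2 g -> Exp g z0 p0.
Proof.
move=> ag u d; apply: cvg_near_cst; near=> s.
have s0 : 0 < s by near: s; exact: nbhs_right_gt.
rewrite (@expand_aff _ _ _ g ag) !dotvZr; field.
by rewrite gt_eqF.
Unshelve. all: by end_near.
Qed.

Lemma diff_exp g z0 p0 : differentiable (uncurry2 g) (z0, p0) -> Exp g z0 p0.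
Proof. by move=> dg u d; apply: expand_diff. Qed.

Lemma conv_grad (g : 'rV[R]_nx -> 'rV[R]_np -> R) (z0 z : 'rV[R]_nx) (p0 p : 'rV[R]_np) : convex_on2 xL xU P g -> Exp g z0 p0 ->
  inbox xL xU z0 -> P p0 -> inbox xL xU z -> P p ->
  g z0 p0 + dotv (gradx g z0 p0) (z - z0) + dotv (grady g z0 p0) (p - p0) <= g z p.
Proof.
move=> cg eg bz0 Pp0 bz Pp.
rewrite -addrA -lerBrDl; apply: (cvgr_to_le (eg (z - z0) (p - p0))).
near=> s.
have s0 : 0 < s by near: s; exact: nbhs_right_gt.
have s1 : s <= 1 by near: s; apply: nbhs_right_ltW; exact: ltr01.
have e1 : z0 + s *: (z - z0) = s *: z + (1 - s) *: z0.
  by rewrite scalerBr scalerBl scale1r addrCA addrC.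
have e2 : p0 + s *: (p - p0) = s *: p + (1 - s) *: p0.
  by rewrite scalerBr scalerBl scale1r addrCA addrC.
rewrite e1 e2 ler_pdivrMr //.
have := cg z p z0 p0 s bz Pp bz0 Pp0; rewrite ltW //= s1 => /(_ isT) H.
move: H; lra.
Unshelve. all: by end_near.
Qed.

Lemma aff_conv (g : 'rV[R]_nx -> 'rV[R]_np -> R) (z0 z : 'rV[R]_nx) (p0 p : 'rV[R]_np) : affine2 g ->
  g z0 p0 + dotv (gradx g z0 p0) (z - z0) + dotv (grady g z0 p0) (p - p0) = g z p.
Proof.
move=> ag; rewrite -(@expand_aff _ _ _ g ag).
by rewrite [z0 + _]addrC subrK [p0 + _]addrC subrK.
Qed.

Lemma convex_neg g : concave_on2 xL xU P g -> convex_on2 xL xU P (fun z p => - g z p).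
Proof. by move=> cg z1 p1 z2 p2 t b1 P1 b2 P2 t01; have := cg _ _ _ _ _ b1 P1 b2 P2 t01; lra. Qed.

Lemma box_affL m : affine2 (fun (z : 'rV[R]_nx) (p : 'rV[R]_np) => xL 0 m - z 0 m).
Proof.
exists (- delta_mx m 0), 0, (xL 0 m) => z p.
rewrite mulmxN mulmx0 -colE !mxE; ring.
Qed.

Lemma box_affU m : affine2 (fun (z : 'rV[R]_nx) (p : 'rV[R]_np) => z 0 m - xU 0 m).
Proof.
exists (delta_mx m 0), 0, (- xU 0 m) => z p.
rewrite mulmx0 -colE !mxE; ring.
Qed.

End Conv.

Unset Implicit Arguments. Set Strict Implicit.


Section Main.
Variables (R : realType) (nf nh np : nat).
Local Notation nx := (nf + nh)%N.
Variables (fcv fcc : 'rV[R]_nx -> 'rV[R]_np -> 'rV[R]_nx) (P : set 'rV[R]_np)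
  (xL xU : 'rV[R]_nx) (kc : 'I_nf -> nat)
  (fcvp : forall k, 'I_(kc k) -> 'rV[R]_nx -> 'rV[R]_np -> R)
  (lc : 'I_nf -> nat) (fccp : forall k, 'I_(lc k) -> 'rV[R]_nx -> 'rV[R]_np -> R)
  (i : 'I_nx) (h : 'I_nh -> 'rV[R]_nx -> 'rV[R]_np -> R).

Set Implicit Arguments. Unset Strict Implicit.

Definition Iidx := (({k : 'I_nf & 'I_(kc k)} + {k : 'I_nf & 'I_(lc k)}) + ('I_nx + 'I_nx))%type.

Definition cfun (j : Iidx) : 'rV[R]_nx -> 'rV[R]_np -> R :=
  match j with
  | inl (inl s) => fcvp (tag s) (tagged s)
  | inl (inr s) => fun z p => - fccp (tag s) (tagged s) z p
  | inr (inl m) => fun z p => xL 0 m - z 0 m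
  | inr (inr m) => fun z p => z 0 m - xU 0 m
  end.

Lemma isgE c : gcomp fcvp fccp xL xU c <-> exists j, c = cfun j.
Proof.
split.
  case=> [[k [j ->]]|[[k [j ->]]|[[m ->]|[m ->]]]].
  - by exists (inl (inl (Tagged (fun k => 'I_(kc k)) j))).
  - by exists (inl (inr (Tagged (fun k => 'I_(lc k)) j))).
  - by exists (inr (inl m)).
  - by exists (inr (inr m)).
case=> [[[[k j]|[k j]]|[m|m]] ->] /=.
- by left; exists k, j.
- by right; left; exists k, j.
- by right; right; left; exists m.
- by right; right; right; exists m.
Qed.

Definition feas p z := (forall j, h j z p = 0) /\ (forall j : Iidx, cfun j z p <= 0).

Lemma feas_box p z : feas p z -> inbox xL xU z.
Proof.
move=> [_ hc] m; apply/andP; split.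
  by have := hc (inr (inl m)); rewrite /= subr_le0.
by have := hc (inr (inr m)); rewrite /= subr_le0.
Qed.

Arguments feas_box {p z}.

Hypothesis hrel : forall z p j,
  fcv z p 0 (rshift nf j) = h j z p /\ fcc z p 0 (rshift nf j) = h j z p.
Hypothesis fcvmax : forall k z p,
  (forall j, fcvp k j z p <= fcv z p 0 (lshift nh k)) /\
  exists j, fcvp k j z p = fcv z p 0 (lshift nh k).
Hypothesis fccmin : forall k z p,
  (forall j, fcc z p 0 (lshift nh k) <= fccp k j z p) /\
  exists j, fccp k j z p = fcc z p 0 (lshift nh k).

Lemma xcv_setE p :
  [set xi | inbox xL xU xi /\ (forall m, fcv xi p 0 m <= 0)
                           /\ (forall m, 0 <= fcc xi p 0 m)] = feas p.
Proof.
apply/seteqP; split => z /=.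
  move=> [bx [hv hc]]; split.
    move=> j; have [e1 e2] := hrel z p j.
    by apply/eqP; rewrite eq_le -{1}e1 hv /= -e2 hc.
  case=> [[[k j]|[k j]]|[m|m]] /=.
  - by apply: le_trans ((fcvmax k z p).1 j) (hv _).
  - by rewrite oppr_le0; apply: le_trans (hc _) ((fccmin k z p).1 j).
  - by rewrite subr_le0; case/andP: (bx m).
  - by rewrite subr_le0; case/andP: (bx m).
move=> fz; split; first exact: feas_box fz.
have [hz cz] := fz.
split=> m; rewrite -(@splitK nf nh m); case: (fintype.split m) => [k|j] /=.
- have [j <-] := (fcvmax k z p).2.
  exact: (cz (inl (inl (Tagged (fun k => 'I_(kc k)) j)))).
- by rewrite (hrel z p j).1 hz.
- have [j <-] := (fccmin k z p).2.
  by have := cz (inl (inr (Tagged (fun k => 'I_(lc k)) j))); rewrite /= oppr_le0.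
- by rewrite (hrel z p j).2 hz.
Qed.

Definition F p := fine (xcv fcv fcc xL xU i p).

Lemma xcvE p : xcv fcv fcc xL xU i p = ereal_inf [set (xi 0 i)%:E | xi in feas p].
Proof. by rewrite /xcv xcv_setE. Qed.

Lemma F_props p z : feas p z ->
  [/\ xcv fcv fcc xL xU i p = (F p)%:E, F p <= z 0 i & xL 0 i <= F p].
Proof.
move=> fz.
have lb : ((xL 0 i)%:E <= xcv fcv fcc xL xU i p)%E.
  rewrite xcvE; apply: le_ereal_inf_tmp => _ [y fy <-].
  by rewrite lee_fin; case/andP: (feas_box fy i).
have ub : (xcv fcv fcc xL xU i p <= (z 0 i)%:E)%E.
  by rewrite xcvE; apply: ereal_inf_lbound; exists z.
have fin : xcv fcv fcc xL xU i p \is a fin_num.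
  by rewrite fin_numE; apply/andP; split;
    [apply/negP => /eqP e; move: lb; rewrite e | apply/negP => /eqP e; move: ub; rewrite e].
have e : xcv fcv fcc xL xU i p = (F p)%:E by rewrite /F fineK.
by split => //; [move: ub | move: lb]; rewrite e lee_fin.
Qed.

Arguments F_props {p z}.

Lemma F_glb p (M : R) : (exists z, feas p z) -> (forall z, feas p z -> M <= z 0 i) ->
  M <= F p.
Proof.
move=> [z fz] hM; have [e _ _] := F_props fz.
rewrite -lee_fin -e xcvE; apply: le_ereal_inf_tmp => _ [y fy <-].
by rewrite lee_fin hM.
Qed.


Lemma aff_lin (g : 'rV[R]_nx -> 'rV[R]_np -> R) z1 z2 p1 p2 (t : R) : affine2 g ->
  g (t *: z1 + (1 - t) *: z2) (t *: p1 + (1 - t) *: p2) =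
  t * g z1 p1 + (1 - t) * g z2 p2.
Proof.
move=> [a [b [c hg]]]; rewrite !hg !mulmxDl !entryD -!scalemxAl !entryZ; ring.
Qed.

Hypothesis Hcvp : forall k j, convex_on2 xL xU P (fcvp k j).
Hypothesis Hccp : forall k j, concave_on2 xL xU P (fccp k j).
Hypothesis haff : forall j, affine2 (h j).

Lemma aff_convex (g : 'rV[R]_nx -> 'rV[R]_np -> R) : affine2 g -> convex_on2 xL xU P g.
Proof. by move=> ag z1 p1 z2 p2 t _ _ _ _ _; rewrite aff_lin. Qed.

Lemma cfun_affL m : affine2 (cfun (inr (inl m))).
Proof. exact: box_affL. Qed.

Lemma cfun_affU m : affine2 (cfun (inr (inr m))).
Proof. exact: box_affU. Qed.

Lemma cfun_convex j : convex_on2 xL xU P (cfun j).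
Proof.
case: j => [[[k j]|[k j]]|[m|m]] /=.
- exact: Hcvp.
- exact: convex_neg.
- exact: aff_convex (cfun_affL m).
- exact: aff_convex (cfun_affU m).
Qed.

Lemma feas_convex p1 p2 z1 z2 (t : R) : P p1 -> P p2 -> feas p1 z1 -> feas p2 z2 ->
  0 <= t <= 1 -> feas (t *: p1 + (1 - t) *: p2) (t *: z1 + (1 - t) *: z2).
Proof.
move=> P1 P2 f1 f2 t01; split.
  by move=> j; rewrite aff_lin // f1.1 f2.1 !mulr0 addr0.
move=> j; have := @cfun_convex j z1 p1 z2 p2 t (feas_box f1) P1 (feas_box f2) P2 t01.
have := f1.2 j; have := f2.2 j; case/andP: t01 => t0 t1.
nra.
Qed.

Arguments feas_convex {p1 p2 z1 z2 t}.

Lemma F_convex (B : set 'rV[R]_np) : B `<=` P -> (forall p, B p -> exists z, feas p z) ->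
  @convex_on R np B F.
Proof.
move=> sub ne p q t Bp Bq t01.
have [z1 f1] := ne p Bp; have [z2 f2] := ne q Bq.
set pt := t *: p + (1 - t) *: q.
have key : forall y1 y2, feas p y1 -> feas q y2 -> F pt <= t * y1 0 i + (1 - t) * y2 0 i.
  move=> y1 y2 g1 g2.
  have [_ le _] := F_props (feas_convex (sub _ Bp) (sub _ Bq) g1 g2 t01).
  by move: le; rewrite !mxE.
have nept : exists z, feas pt z.
  by exists (t *: z1 + (1 - t) *: z2); exact: feas_convex (sub _ Bp) (sub _ Bq) f1 f2 t01.
case/andP: t01 => t0 t1.
have [te|tn0] := eqVneq t 0.
  have -> : pt = q by rewrite /pt te scale0r add0r subr0 scale1r.
  by rewrite te mul0r add0r subr0 mul1r.
have tp : 0 < t by rewrite lt_neqAle eq_sym tn0.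
have step1 : forall y2, feas q y2 -> F pt <= t * F p + (1 - t) * y2 0 i.
  move=> y2 g2.
  have : (F pt - (1 - t) * y2 0 i) / t <= F p.
    apply: F_glb; first by exists z1.
    move=> y1 g1; rewrite ler_pdivrMr //; have := key y1 y2 g1 g2; lra.
  rewrite ler_pdivrMr //; lra.
have [e1|tn1] := eqVneq t 1.
  by have := step1 z2 f2; rewrite e1 subrr !mul0r.
have tp1 : 0 < 1 - t by rewrite subr_gt0 lt_neqAle tn1.
have : (F pt - t * F p) / (1 - t) <= F q.
  apply: F_glb; first by exists z2.
  move=> y2 g2; rewrite ler_pdivrMr //; have := step1 y2 g2; lra.
rewrite ler_pdivrMr //; lra.
Qed.

Hypothesis HC1v : forall k j, C1 (fcvp k j).
Hypothesis HC1c : forall k j, C1 (fccp k j).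

Lemma cfun_exp j z0 p0 : Exp (cfun j) z0 p0.
Proof.
case: j => [[[k j]|[k j]]|[m|m]] /=.
- by apply: diff_exp; case: (@HC1v k j) => H _; exact: H.
- apply: diff_exp.
  have -> : uncurry2 (fun z p => - fccp k j z p) = - uncurry2 (fccp k j).
    by apply/funext.
  by apply: differentiableN; case: (@HC1c k j) => H _; exact: H.
- exact: aff_exp (box_affL _ _ m).
- exact: aff_exp (box_affU _ _ m).
Qed.

Lemma cfun_conv j z0 p0 z p : inbox xL xU z0 -> P p0 -> inbox xL xU z -> P p ->
  cfun j z0 p0 + dotv (gradx (cfun j) z0 p0) (z - z0) +
    dotv (grady (cfun j) z0 p0) (p - p0) <= cfun j z p.
Proof.
move=> b0 P0 b P1; apply: (conv_grad (P:=P)) => //; last exact: cfun_exp.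
exact: cfun_convex.
Qed.

Lemma small_step (ph d : 'rV[R]_np) (rho t : R) : 0 < rho -> 0 <= t ->
  t < rho / (`|d| + 1) -> `|ph + t *: d - ph| < rho.
Proof.
move=> rho0 t0 tt; rewrite addrAC subrr add0r normrZ ger0_norm //.
have d0 := normr_ge0 d.
apply: le_lt_trans (_ : rho / (`|d| + 1) * `|d| < rho).
  by apply: ler_wpM2r => //; exact: ltW.
rewrite mulrAC ltr_pdivrMr ?ltr_wpDl // ltr_pM2l // ltrDl //.
Qed.


Definition strict p xi := (forall j, h j xi p = 0) /\ (forall j, cfun j xi p < 0).

Lemma strict_feas p xi : strict p xi -> feas p xi.
Proof. by case=> h1 h2; split=> // j; exact: ltW. Qed.

Variable phat : 'rV[R]_np.
Hypothesis slater : exists N, nbhs phat N /\ N `<=` P /\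
  forall p, N p -> exists xi, strict p xi.

Lemma ball_ok : exists rho, 0 < rho /\ forall p, `|p - phat| < rho -> P p /\ exists xi, strict p xi.
Proof.
case: slater => N [NN [NP Ns]].
have /nbhs_normP [e /= e0 sub] := NN.
exists e; split => // p hp.
have Np : N p by apply: sub; rewrite /= distrC.
by split; [exact: NP | exact: Ns].
Qed.

Lemma setup : exists r L, 0 < r /\ (forall p, `|p - phat| < r -> P p /\ exists xi, strict p xi) /\ (forall p q, `|p - phat| < r -> `|q - phat| < r ->
     `|F p - F q| <= L * `|p - q|) /\ convex_on [set p | `|p - phat| < r] F.
Proof.
have [rho [rho0 hb]] := ball_ok.
set r := rho / 2.
have r0 : 0 < r by rewrite /r divr_gt0.
have r2 : 2 * r = rho by rewrite /r; field.
have hb2 : forall p, `|p - phat| < 2 * r -> P p /\ exists xi, feas p xi.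
  move=> p; rewrite r2 => /hb [Pp [xi sx]]; split => //; exists xi.
  exact: strict_feas.
have cvx2 : convex_on [set p | `|p - phat| < 2 * r] F.
  by apply: F_convex => p /hb2 [].
have bnd : forall p, `|p - phat| < 2 * r -> xL 0 i <= F p <= xU 0 i.
  move=> p /hb2 [_ [xi fx]]; have [_ le1 le2] := F_props fx.
  rewrite le2 /=; apply: le_trans le1 _.
  by case/andP: (feas_box fx i).
exists r, ((xU 0 i - xL 0 i) / r); split => //; split.
  move=> p hp; apply: hb; apply: lt_trans hp _; rewrite /r; lra.
split; first exact: (lip_convex r0 cvx2 bnd).
have hsub : forall p, `|p - phat| < r -> `|p - phat| < 2 * r.
  by move=> p hp; apply: lt_trans hp _; lra.
by apply: F_convex => p /hsub /hb2 [].
Qed.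


Lemma Pphat : P phat.
Proof.
have [rho [rho0 hb]] := ball_ok.
have hp : `|phat - phat| < rho by rewrite subrr normr0.
by have [] := hb phat hp.
Qed.

Section Part3.
Variable xihat : 'rV[R]_nx.
Hypothesis fxi : feas phat xihat.
Hypothesis xmin : forall xi, feas phat xi -> xihat 0 i <= xi 0 i.
Variable d : 'rV[R]_np.

Definition lpf w :=
  (forall j, cfun j xihat phat = 0 ->
     dotv (gradx (cfun j) xihat phat) w <= - dotv (grady (cfun j) xihat phat) d) /\
  (forall j, dotv (gradx (h j) xihat phat) w = - dotv (grady (h j) xihat phat) d).

Lemma F_phat : F phat = xihat 0 i.
Proof.
apply/eqP; rewrite eq_le; apply/andP; split; first by have [] := F_props fxi.
by apply: F_glb => //; exists xihat.
Qed.

Lemma LB t xi : 0 < t -> P (phat + t *: d) -> feas (phat + t *: d) xi ->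
  lpf (t^-1 *: (xi - xihat)).
Proof.
move=> t0 Pt fx; have bx := feas_box fx; have bh := feas_box fxi.
have ed : phat + t *: d - phat = t *: d by rewrite addrAC subrr add0r.
split.
  move=> j act; have := cfun_conv j bh Pphat bx Pt.
  rewrite act ed add0r dotvZr => H; have H2 := fx.2 j.
  rewrite dotvZr mulrC ler_pdivrMr //; lra.
move=> j; have := aff_conv xihat xi phat (phat + t *: d) (haff j).
rewrite (fxi.1 j) (fx.1 j) ed add0r dotvZr dotvZr => H.
have -> : dotv (gradx (h j) xihat phat) (xi - xihat) =
  - (t * dotv (grady (h j) xihat phat) d) by lra.
by field; rewrite gt_eqF.
Qed.

Lemma UB w : lpf w -> forall eta, 0 < eta ->
  \forall t \near 0^'+, F (phat + t *: d) <= xihat 0 i + t * (w 0 i + eta).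
Proof.
move=> [lw1 lw2] eta eta0.
have [rho [rho0 hb]] := ball_ok.
have [_ [xs [sh sc]]] : P phat /\ exists xi, strict phat xi.
  by apply: hb; rewrite subrr normr0.
have fxs : feas phat xs by apply: strict_feas.
have bxs := feas_box fxs; have bh := feas_box fxi.
set K := `|(xs - xihat) 0 i|.
have K0 : 0 <= K by apply: normr_ge0.
set eps := eta / (K + 1).
have eps0 : 0 < eps by rewrite /eps divr_gt0 // ltr_wpDl.
set u := w + eps *: (xs - xihat).
have gxs : forall j, dotv (gradx (h j) xihat phat) (xs - xihat) = 0.
  move=> j; have := aff_conv xihat xs phat phat (haff j).
  by rewrite subrr dotv0r addr0 (fxi.1 j) (fxs.1 j) add0r.
have hh : forall t j, h j (xihat + t *: u) (phat + t *: d) = 0.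
  move=> t j; rewrite (expand_aff (haff j)) (fxi.1 j) !dotvZr /u dotvDr dotvZr.
  by rewrite gxs lw2; ring.
have hc : \forall t \near 0^'+, forall j, cfun j (xihat + t *: u) (phat + t *: d) <= 0.
  apply: filter_forall => j.
  have ex := @cfun_exp j xihat phat u d.
  set Lj := dotv (gradx (cfun j) xihat phat) u + dotv (grady (cfun j) xihat phat) d.
  have [act|inact] := eqVneq (cfun j xihat phat) 0.
    have G : dotv (gradx (cfun j) xihat phat) (xs - xihat) < 0.
      have := cfun_conv j bh Pphat bxs Pphat.
      rewrite act subrr dotv0r addr0 add0r => H.
      exact: le_lt_trans H (sc j).
    have Lneg : Lj < 0.
      have := lw1 j act; rewrite /Lj /u dotvDr dotvZr.
      have : eps * dotv (gradx (cfun j) xihat phat) (xs - xihat) < 0.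
        by rewrite pmulr_rlt0.
      lra.
    near=> t.
    have t0 : 0 < t by near: t; exact: nbhs_right_gt.
    have qt : (cfun j (xihat + t *: u) (phat + t *: d) - cfun j xihat phat) / t < 0.
      by near: t; exact: (cvgr_lt _ ex 0 Lneg).
    move: qt; rewrite act subr0 ltr_pdivrMr // mul0r; exact: ltW.
  have c0 : cfun j xihat phat < 0 by rewrite lt_neqAle inact fxi.2.
  have L1 : Lj < `|Lj| + 1 by apply: le_lt_trans (ler_norm Lj) _; rewrite ltrDl.
  have bnd0 : 0 < - cfun j xihat phat / (`|Lj| + 1).
    by rewrite divr_gt0 ?oppr_gt0 // ltr_wpDl.
  near=> t.
  have t0 : 0 < t by near: t; exact: nbhs_right_gt.
  have tb : t < - cfun j xihat phat / (`|Lj| + 1).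
    by near: t; exact: nbhs_right_lt bnd0.
  have qt : (cfun j (xihat + t *: u) (phat + t *: d) - cfun j xihat phat) / t < `|Lj| + 1.
    by near: t; exact: (cvgr_lt _ ex _ L1).
  move: qt tb; rewrite ltr_pdivrMr // ltr_pdivlMr ?ltr_wpDl //.
  move=> h1 h2; apply: ltW; lra.
have epsK : eps * (xs - xihat) 0 i <= eta.
  apply: le_trans (_ : eps * K <= eta).
    by apply: ler_wpM2l; [exact: ltW | exact: ler_norm].
  rewrite /eps mulrAC ler_pdivrMr ?ltr_wpDl // ler_pM2l //; lra.
near=> t.
have t0 : 0 < t by near: t; exact: nbhs_right_gt.
have hct : forall j, cfun j (xihat + t *: u) (phat + t *: d) <= 0.
  by near: t; exact: hc.
have ft : feas (phat + t *: d) (xihat + t *: u) by split; [exact: hh | exact: hct].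
have [_ le _] := F_props ft; apply: le_trans le _.
have := epsK; rewrite /u !mxE => e2.
apply: lerD => //; apply: ler_wpM2l; first exact: ltW.
lra.
Unshelve. all: by end_near.
Qed.


Definition la (x : (Iidx + 'I_nh)%type) : 'rV[R]_nx :=
  match x with
  | inl j => if cfun j xihat phat == 0 then gradx (cfun j) xihat phat else 0
  | inr j => gradx (h j) xihat phat
  end.

Definition lb (x : (Iidx + 'I_nh)%type) : R :=
  match x with
  | inl j => if cfun j xihat phat == 0 then - dotv (grady (cfun j) xihat phat) d else 0
  | inr j => - dotv (grady (h j) xihat phat) d
  end.

Definition lE : {set (Iidx + 'I_nh)} := [set x | if x is inr _ then true else false].

Lemma lpS_lpf w : lpS la lb lE w <-> lpf w.
Proof.
split.
  move=> [H1 H2]; split.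
    by move=> j act; have := H1 (inl j); rewrite /= act eqxx.
  by move=> j; apply: (H2 (inr j)); rewrite inE.
move=> [A B]; split.
  case=> j /=; last by rewrite B.
  by case: eqP => [act|_]; [exact: A | rewrite dotv0l].
by case=> j //=; rewrite inE.
Qed.

Lemma part3 : exists w, lpf w /\ (forall w', lpf w' -> w 0 i <= w' 0 i) /\
  has_dirderiv F phat d (w 0 i).
Proof.
have [r [L [r0 [hb [lip cvx]]]]] := setup.
have Fp := F_phat.
set tau := r / (`|d| + 1).
have tau0 : 0 < tau by rewrite /tau divr_gt0 // ltr_wpDl.
have inb : forall t, 0 <= t -> t < tau -> `|phat + t *: d - phat| < r.
  by move=> t t0 tt; exact: small_step.
have ne : exists w, lpS la lb lE w.
  have t1 : 0 < tau / 2 by rewrite divr_gt0.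
  have t2 : tau / 2 < tau by lra.
  have [Pt [xi sx]] := hb _ (inb (tau / 2) (ltW t1) t2).
  exists ((tau / 2)^-1 *: (xi - xihat)); apply/lpS_lpf.
  by apply: LB => //; exact: strict_feas.
have bnd : forall w, lpS la lb lE w -> - (L * `|d|) <= dotv (delta_mx 0 i) w.
  move=> w /lpS_lpf lw; rewrite dotv_delta leNgt; apply/negP => lt.
  set eta := (- (L * `|d|) - w 0 i) / 2.
  have eta0 : 0 < eta by rewrite /eta divr_gt0 // subr_gt0.
  have etaE : eta * 2 = - (L * `|d|) - w 0 i by rewrite /eta; field.
  have U := UB lw eta0.
  suff : \forall t \near (0 : R)^'+, False by move/filter_ex => [].
  near=> t.
  have t0 : 0 < t by near: t; exact: nbhs_right_gt.
  have tt : t < tau by near: t; exact: nbhs_right_lt.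
  have Ut : F (phat + t *: d) <= xihat 0 i + t * (w 0 i + eta) by near: t; exact: U.
  have lt' := lip _ _ (inb 0 (lexx 0) tau0) (inb t (ltW t0) tt).
  move: lt'; rewrite scale0r addr0 Fp opprD addrA subrr add0r normrN normrZ.
  rewrite (ger0_norm (ltW t0)) ler_norml => /andP [_ h2].
  have : 0 <= t * (w 0 i + eta + L * `|d|) by lra.
  rewrite pmulr_rge0 //; lra.
have [ws [Sws wsmin]] := lp_attain ne bnd.
move/lpS_lpf: Sws => lws.
exists ws; split => //; split.
  move=> w' /lpS_lpf lw'; have := wsmin _ lw'; by rewrite !dotv_delta.
apply/cvgrPdist_lt => e e0.
have e20 : 0 < e / 2 by rewrite divr_gt0.
have U := UB lws e20.
near=> t.
have t0 : 0 < t by near: t; exact: nbhs_right_gt.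
have tt : t < tau by near: t; exact: nbhs_right_lt.
have Ut : F (phat + t *: d) <= xihat 0 i + t * (ws 0 i + e / 2) by near: t; exact: U.
have [Pt [xi0 sx0]] := hb _ (inb t (ltW t0) tt).
have Lt : xihat 0 i + t * ws 0 i <= F (phat + t *: d).
  apply: F_glb; first by exists xi0; exact: strict_feas.
  move=> xi fx; have := wsmin _ (proj2 (lpS_lpf _) (LB t0 Pt fx)).
  rewrite !dotv_delta !mxE => hle.
  have : t * ws 0 i <= t * (t^-1 * (xi 0 i - xihat 0 i)).
    by apply: ler_wpM2l => //; exact: ltW.
  rewrite mulrA mulfV ?gt_eqF // mul1r; lra.
have te : 0 < t * e by rewrite mulr_gt0.
rewrite Fp distrC ger0_norm.
  rewrite ltrBlDl ltr_pdivrMr //; lra.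
rewrite subr_ge0 ler_pdivlMr //; lra.
Unshelve. all: by end_near.
Qed.

End Part3.

End Main.

Unset Implicit Arguments. Set Strict Implicit.

Theorem proposition5p1 (R : realType) (nf nh np : nat)
  (f fcv fcc : 'rV[R]_(nf + nh) -> 'rV[R]_np -> 'rV[R]_(nf + nh))
  (P : set 'rV[R]_np) (xL xU : 'rV[R]_(nf + nh))
  (x : 'rV[R]_np -> 'rV[R]_(nf + nh))
  (kc : 'I_nf -> nat) (fcvp : forall k, 'I_(kc k) -> 'rV[R]_(nf + nh) -> 'rV[R]_np -> R)
  (lc : 'I_nf -> nat) (fccp : forall k, 'I_(lc k) -> 'rV[R]_(nf + nh) -> 'rV[R]_np -> R)
  (phat : 'rV[R]_np) (i : 'I_(nf + nh)) :
  let ftil k z p := f z p 0 (lshift nh k) in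
  let h j z p := f z p 0 (rshift nf j) in
  let Q := [set p | P p /\ exists z, f z p = 0] in
  let X := inbox xL xU in
  let isg := gcomp fcvp fccp xL xU in
  let F p := fine (xcv fcv fcc xL xU i p) in
  (* P convex (MathComp-Analysis convex_set) and compact, Q nonempty *)
  convex_set P -> compact P -> Q !=set0 ->
  (* implicit function x : Q -> X *)
  (forall p, Q p -> f (x p) p = 0 /\ X (x p)) ->
  (* fcv, fcc are convex / concave relaxations of f on X x P *)
  (forall z p m, X z -> P p -> fcv z p 0 m <= f z p 0 m <= fcc z p 0 m) ->
  (forall m, convex_on2 xL xU P (fun z p => fcv z p 0 m)) ->
  (forall m, concave_on2 xL xU P (fun z p => fcc z p 0 m)) ->
  (* h affine, each ftilde_k not affine *)
  (forall j, affine2 (h j)) ->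
  (forall k, ~ affine2 (ftil k)) ->
  (* the relaxations of the affine part h are h itself *)
  (forall z p j, fcv z p 0 (rshift nf j) = h j z p /\ fcc z p 0 (rshift nf j) = h j z p) ->
  (* piecewise differentiable relaxations of ftilde_k *)
  (forall k z p, (forall j, fcvp k j z p <= fcv z p 0 (lshift nh k)) /\
                 exists j, fcvp k j z p = fcv z p 0 (lshift nh k)) ->
  (forall k z p, (forall j, fcc z p 0 (lshift nh k) <= fccp k j z p) /\
                 exists j, fccp k j z p = fcc z p 0 (lshift nh k)) ->
  (forall k j, C1 (fcvp k j) /\ convex_on2 xL xU P (fcvp k j)) ->
  (forall k j, C1 (fccp k j) /\ concave_on2 xL xU P (fccp k j)) ->
  (* phat in int(Q) *)
  (interior Q) phat ->
  (* linear independence of the gradients of h_j w.r.t. xi *)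
  (forall z p, row_free (\matrix_(j < nh, m < nf + nh) gradx (h j) z p 0 m)) ->
  (* strong Slater condition *)
  (exists N, nbhs phat N /\ N `<=` Q /\
     forall p, N p -> exists xi, X xi /\ (forall j, h j xi p = 0) /\
                                 forall c, isg c -> c xi p < 0) ->
  (* conclusions *)
  (* locally Lipschitz near phat *)
  (exists r : R, 0 < r /\ exists L : R,
     forall p q, `|p - phat| < r -> `|q - phat| < r ->
       xcv fcv fcc xL xU i p \is a fin_num /\ `|F p - F q| <= L * `|p - q|) /\
  (* directionally differentiable at phat *)
  (forall d, exists l, has_dirderiv F phat d l) /\
  (* formula for the directional derivative *)
  (forall xihat,
     ((forall j, h j xihat phat = 0) /\ (forall c, isg c -> c xihat phat <= 0) /\
      forall xi, (forall j, h j xi phat = 0) -> (forall c, isg c -> c xi phat <= 0) ->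
        xihat 0 i <= xi 0 i) ->
     forall d,
       let lpfeas w :=
         (forall c, isg c -> c xihat phat = 0 ->
             dotv (gradx c xihat phat) w <= - dotv (grady c xihat phat) d) /\
         (forall j, dotv (gradx (h j) xihat phat) w = - dotv (grady (h j) xihat phat) d) in
       exists w, lpfeas w /\ (forall w', lpfeas w' -> w 0 i <= w' 0 i) /\
                 has_dirderiv F phat d (w 0 i)).
Proof.
move=> ftil h Q X isg F Pconv Pcomp Qne xdef rel cvx ccv haff nonaff hrel
  fcvmax fccmin fcvpC fccpC intQ rowfree slater.
have Hcvp : forall k j, convex_on2 xL xU P (fcvp k j) by move=> k j; case: (fcvpC k j).
have Hccp : forall k j, concave_on2 xL xU P (fccp k j) by move=> k j; case: (fccpC k j).
have HC1v : forall k j, C1 (fcvp k j) by move=> k j; case: (fcvpC k j).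
have HC1c : forall k j, C1 (fccp k j) by move=> k j; case: (fccpC k j).
have slater' : exists N, nbhs phat N /\ N `<=` P /\
    forall p, N p -> exists xi, strict xL xU fcvp fccp h p xi.
  case: slater => N [NN [NQ Ns]]; exists N; split => //; split.
    by move=> p /NQ [].
  move=> p Np; have [xi [_ [hx cx]]] := Ns p Np; exists xi; split => // j.
  by apply: cx; apply/isgE; exists j.
have [r [L [r0 [hb [lip cvx']]]]] := setup i hrel fcvmax fccmin Hcvp Hccp haff slater'.
split.
  exists r; split => //; exists L => p q hp hq; split; last exact: lip.
  have [_ [xi sx]] := hb p hp.
  by have [e _ _] := F_props i hrel fcvmax fccmin (strict_feas sx); rewrite e.
split.
  by move=> d; exact: (dirderiv_convex r0 cvx' lip).
move=> xihat [hxi [gxi minxi]] d lpfeas.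
have fxi : feas xL xU fcvp fccp h phat xihat.
  by split => // j; apply: gxi; apply/isgE; exists j.
have xmin : forall xi, feas xL xU fcvp fccp h phat xi -> xihat 0 i <= xi 0 i.
  by move=> xi [hx cx]; apply: minxi => // c /isgE [j ->]; exact: cx.
have [w [lw [wmin wd]]] := part3 hrel fcvmax fccmin Hcvp Hccp haff HC1v HC1c slater' fxi xmin d.
have conv : forall w', lpfeas w' <-> lpf xL xU fcvp fccp h phat xihat d w'.
  move=> w'; rewrite /lpfeas; split.
    move=> [A B]; split => // j; apply: A; apply/isgE; by exists j.
  move=> [A B]; split => // c /isgE [j ->]; exact: A.
exists w; split; first by apply/conv.
split => //.
by move=> w' /conv; exact: wmin.
Qed.
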